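(* Let $X$ be a countably infinite set and $W=\{0,1\}^X$. There is no binary relation $\succeq$ on $W$ that is a preorder (reflexive and transitive) and simultaneously satisfies Strong Pareto, Permutation Invariance, and Completeness.
   Context: Elements of $W$ (''worlds'') are functions $w:X\to\mathbb R$ (here with values in $\{0,1\}$). For a preorder $\succeq$, write $w\succ v$ iff $w\succeq v$ and not $v\succeq w$. For a permutation $\pi$ of $X$ and $w\in W$, define $\pi(w)\in W$ by $\pi(w)(x)=w(\pi(x))$. Strong Pareto: for all $w,v\in W$, if $w(x)\ge v(x)$ for all $x\in X$ and $w(x)>v(x)$ for some $x\in X$, then $w\succ v$. Permutation Invariance: for all $w,v\in W$ and every permutation $\pi$ of $X$, $w\succeq v$ if and only if $\pi(w)\succeq\pi(v)$. Completeness: for all $w,v\in W$, $w\succeq v$ or $v\succeq w$. *)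

(* Defs.v *)
From Stdlib Require Import Arith.

Definition val (b : bool) : nat := if b then 1 else 0.

Definition world (X : Type) : Type := X -> bool.

Definition countably_infinite (X : Type) : Prop :=
  exists f : X -> nat, (forall x y, f x = f y -> x = y) /\ (forall n, exists x, f x = n).

Definition bijective {A : Type} (p : A -> A) : Prop :=
  (forall x y, p x = p y -> x = y) /\ (forall y, exists x, p x = y).

Definition permute {X : Type} (p : X -> X) (w : world X) : world X :=
  fun x => w (p x).

Definition preorder {A : Type} (R : A -> A -> Prop) : Prop :=
  (forall a, R a a) /\ (forall a b c, R a b -> R b c -> R a c).

Definition strict {A : Type} (R : A -> A -> Prop) (a b : A) : Prop :=
  R a b /\ ~ R b a.

Definition strong_pareto {X : Type} (R : world X -> world X -> Prop) : Prop :=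
  forall w v : world X,
    (forall x, val (v x) <= val (w x)) ->
    (exists x, val (v x) < val (w x)) ->
    strict R w v.

Definition permutation_invariance {X : Type} (R : world X -> world X -> Prop) : Prop :=
  forall (w v : world X) (p : X -> X), bijective p ->
    (R w v <-> R (permute p w) (permute p v)).

Definition completeness {A : Type} (R : A -> A -> Prop) : Prop :=
  forall a b, R a b \/ R b a.

(* Main.v *)
Require Import Defs.
From Stdlib Require Import Arith Lia Bool ClassicalEpsilon FunctionalExtensionality.

Definition qq (n : nat) : nat :=
  if n =? 1 then 1 else if Nat.even n then n + 3 else n - 3.
Definition sw (n : nat) : nat := if Nat.even n then n + 1 else n - 1.

Lemma even_cases n : (exists k, n = 2 * k) \/ (exists k, n = 2 * k + 1).
Proof. destruct (Nat.Even_or_Odd n) as [[k H]|[k H]]; eauto. Qed.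

Lemma ev2 k : Nat.even (2 * k) = true.
Proof. rewrite Nat.even_mul; reflexivity. Qed.
Lemma ev2p k r : Nat.even (2 * k + r) = Nat.even r.
Proof. rewrite Nat.even_add, ev2. destruct (Nat.even r); reflexivity. Qed.

Lemma qq_invol n : qq (qq n) = n.
Proof.
  unfold qq. destruct (even_cases n) as [[k ->]|[k ->]].
  - destruct (2*k =? 1) eqn:E; [apply Nat.eqb_eq in E; lia|].
    rewrite ev2. replace (2*k+3) with (2*(k+1)+1) by lia.
    destruct (2*(k+1)+1 =? 1) eqn:E2; [apply Nat.eqb_eq in E2; lia|].
    rewrite ev2p. simpl. lia.
  - destruct k as [|k]. reflexivity.
    destruct (2 * S k + 1 =? 1) eqn:E; [apply Nat.eqb_eq in E; lia|].
    rewrite ev2p. change (Nat.even 1) with false; cbv iota.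
    replace (2 * S k + 1 - 3) with (2*k) by lia.
    destruct (2*k =? 1) eqn:E2; [apply Nat.eqb_eq in E2; lia|].
    rewrite ev2. lia.
Qed.

Lemma sw_invol n : sw (sw n) = n.
Proof.
  unfold sw. destruct (even_cases n) as [[k ->]|[k ->]].
  - rewrite ev2. rewrite ev2p. simpl. lia.
  - rewrite ev2p. change (Nat.even 1) with false; cbv iota. replace (2*k+1-1) with (2*k) by lia.
    rewrite ev2. lia.
Qed.

Lemma even_sw n : Nat.even (sw n) = negb (Nat.even n).
Proof.
  unfold sw. destruct (even_cases n) as [[k ->]|[k ->]].
  - rewrite ev2, ev2p. reflexivity.
  - rewrite ev2p. change (Nat.even 1) with false; cbv iota. replace (2*k+1-1) with (2*k) by lia. rewrite ev2. reflexivity.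
Qed.

Lemma even_qq n : Nat.even (qq n) = negb (Nat.even n) && negb (n =? 1).
Proof.
  unfold qq. destruct (even_cases n) as [[k ->]|[k ->]].
  - destruct (2*k =? 1) eqn:E; [apply Nat.eqb_eq in E; lia|].
    rewrite ev2. replace (2*k+3) with (2*(k+1)+1) by lia. rewrite ev2p. reflexivity.
  - destruct k as [|k]. reflexivity.
    destruct (2 * S k + 1 =? 1) eqn:E; [apply Nat.eqb_eq in E; lia|].
    rewrite ev2p. change (Nat.even 1) with false; cbv iota.
    replace (2 * S k + 1 - 3) with (2*k) by lia. rewrite ev2. reflexivity.
Qed.

Theorem proposition1 (X : Type) (HX : countably_infinite X) :
  ~ exists R : world X -> world X -> Prop,
      preorder R /\ strong_pareto R /\ permutation_invariance R /\ completeness R.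
Proof.
  intros [R [[Hrefl Htr] [HP [HI HC]]]].
  destruct HX as [f [finj fsurj]].
  assert (G : forall n, {x | f x = n}).
  { intro n. apply constructive_indefinite_description. apply fsurj. }
  set (g := fun n => proj1_sig (G n)).
  assert (fg : forall n, f (g n) = n) by (intro n; exact (proj2_sig (G n))).
  assert (gf : forall x, g (f x) = x) by (intro x; apply finj; rewrite fg; reflexivity).
  assert (mkbij : forall s : nat -> nat, (forall n, s (s n) = n) ->
            bijective (fun x => g (s (f x)))).
  { intros s Hs. split.
    - intros x y H. apply (f_equal f) in H. rewrite !fg in H.
      apply (f_equal s) in H. rewrite !Hs in H. auto.
    - intro y. exists (g (s (f y))). rewrite fg, Hs, gf. reflexivity. }
  set (a := fun x : X => Nat.even (f x)).
  set (b := fun x : X => negb (Nat.even (f x))).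
  set (c := fun x : X => negb (Nat.even (f x)) && negb (f x =? 1)).
  set (d := fun x : X => Nat.even (f x) || (f x =? 1)).
  assert (Rab : R a b).
  { destruct (HC a b) as [H|H]; auto.
    apply (HI b a _ (mkbij sw sw_invol)) in H.
    replace (permute (fun x => g (sw (f x))) b) with a in H.
    replace (permute (fun x => g (sw (f x))) a) with b in H. exact H.
    all: apply functional_extensionality; intro x; unfold permute, a, b;
      rewrite fg, even_sw; destruct (Nat.even (f x)); reflexivity. }
  assert (Rcd : R c d).
  { apply (HI a b _ (mkbij qq qq_invol)) in Rab.
    replace (permute (fun x => g (qq (f x))) a) with c in Rab.
    replace (permute (fun x => g (qq (f x))) b) with d in Rab. exact Rab.
    all: apply functional_extensionality; intro x; unfold permute, a, b, c, d;
      rewrite fg, even_qq; destruct (Nat.even (f x)), (f x =? 1); reflexivity. }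
  assert (Hda : strict R d a).
  { apply HP.
    - intro x. unfold a, d. destruct (Nat.even (f x)), (f x =? 1); simpl; lia.
    - exists (g 1). unfold a, d. rewrite fg. simpl. lia. }
  assert (Hbc : strict R b c).
  { apply HP.
    - intro x. unfold b, c. destruct (Nat.even (f x)), (f x =? 1); simpl; lia.
    - exists (g 1). unfold b, c. rewrite fg. simpl. lia. }
  apply (proj2 Hbc). eapply Htr; [exact Rcd|]. eapply Htr; [exact (proj1 Hda)|exact Rab].
Qed.
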